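(* Let $E$ be a finite nonempty set, $f:2^E\to\mathbb{N}$ an integral polymatroid rank function, and let $C_e:\mathbb{N}\times\mathbb{N}\to\mathbb{R}_+$, $e\in E$, be regular functions. Let $D\subseteq\mathbb{N}$ be a set of integers with $\mathbb{B}_f(d)\neq\emptyset$ for all $d\in D$. Then for every $\vec t\in\mathbb{N}^E$, every $d\in D$, every optimal solution $\vec x^*(\vec t,d)$ of $P(\vec t,d)$, every $d'\in D$ and every $\vec t'\in\mathbb{N}^E$, there is an optimal solution $\vec x^*(\vec t',d')$ of $P(\vec t',d')$ with $\|\vec x^*(\vec t,d)-\vec x^*(\vec t',d')\|\le 2\|\vec t-\vec t'\|+|d-d'|$.
   Context: $\mathbb{N}=\{0,1,2,\dots\}$. A set function $f:2^E\to\mathbb{N}$ is an integral polymatroid rank function if $f(\emptyset)=0$, $f$ is monotone and submodular. For $\vec x\in\mathbb{N}^E$, $x(U)=\sum_{e\in U}x_e$; $\mathbb{B}_f(d)=\{\vec x\in\mathbb{N}^E: x(U)\le f(U)\ \forall U\subseteq E,\ x(E)=d\}$. $P(\vec t,d)$: minimize $\sum_{e\in E}C_e(x_e;t_e)$ subject to $\vec x\in\mathbb{B}_f(d)$. $\|\cdot\|$ is the $L_1$-norm. For $C:\mathbb{N}\times\mathbb{N}\to\mathbb{R}$, $C^-(x;t)=C(x;t)-C(x-1;t)$ for $x\ge1$; $C$ is regular if $C^-(x;t)\le C^-(x;t+1)$ and $C^-(x;t+1)\le C^-(x+1;t)$ for all $x\ge1$, $t\in\mathbb{N}$. *)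

(* Defs.v *)
From mathcomp Require Import all_boot all_order all_algebra.
From mathcomp Require Export reals.
Set Implicit Arguments. Unset Strict Implicit. Unset Printing Implicit Defensive.
Import Order.TTheory GRing.Theory Num.Theory.

Definition xsum (E : finType) (x : {ffun E -> nat}) (U : {set E}) : nat :=
  (\sum_(e in U) x e)%N.

Definition polymatroid_rank (E : finType) (f : {set E} -> nat) : Prop :=
  [/\ f set0 = 0%N,
      (forall A B : {set E}, A \subset B -> f A <= f B)%N &
      (forall A B : {set E}, f (A :|: B) + f (A :&: B) <= f A + f B)%N].

Definition in_base (E : finType) (f : {set E} -> nat) (d : nat)
    (x : {ffun E -> nat}) : Prop :=
  (forall U : {set E}, xsum x U <= f U)%N /\ xsum x setT = d.

(* C^-(x;t) = C(x;t) - C(x-1;t), x >= 1 *)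
Definition Cminus (R : pzRingType) (C : nat -> nat -> R) (x t : nat) : R :=
  (C x t - C x.-1 t)%R.

Definition regular (R : numDomainType) (C : nat -> nat -> R) : Prop :=
  forall x t : nat, (0 < x)%N ->
    (Cminus C x t <= Cminus C x t.+1)%R /\ (Cminus C x t.+1 <= Cminus C x.+1 t)%R.

Definition total_cost (R : pzRingType) (E : finType) (C : E -> nat -> nat -> R)
    (t x : {ffun E -> nat}) : R :=
  (\sum_(e : E) C e (x e) (t e))%R.

Definition optimal (R : numDomainType) (E : finType) (f : {set E} -> nat)
    (C : E -> nat -> nat -> R) (t : {ffun E -> nat}) (d : nat)
    (x : {ffun E -> nat}) : Prop :=
  in_base f d x /\
  forall y : {ffun E -> nat}, in_base f d y -> (total_cost C t x <= total_cost C t y)%R.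

Definition l1dist (E : finType) (x y : {ffun E -> nat}) : nat :=
  (\sum_(e : E) `|x e - y e|)%N.

(* Main.v *)
Require Import Defs.
From mathcomp Require Import all_boot all_order all_algebra.
Import Order.TTheory GRing.Theory Num.Theory.
From mathcomp Require Import zify ring lra.
Set Implicit Arguments. Unset Strict Implicit. Unset Printing Implicit Defensive.

Section Basics.
Variable E : finType.
Implicit Types (x y : {ffun E -> nat}) (U V : {set E}).

Definition swap x (i j : E) : {ffun E -> nat} :=
  [ffun k => x k + (k == j) - (k == i)]%N.

Lemma swapE x i j k : (0 < x i)%N -> i != j ->
  (swap x i j k + (k == i) = x k + (k == j))%N.
Proof.
move=> xi ij; rewrite ffunE.
case: (k =P i) => [->|ki]; first by rewrite (negbTE ij) /=; lia.
case: (k =P j) => [->|kj] /=; lia.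
Qed.

Lemma swap_i x i j : i != j -> swap x i j i = (x i - 1)%N.
Proof. by move=> ij; rewrite ffunE eqxx (negbTE ij) addn0. Qed.
Lemma swap_j x i j : i != j -> swap x i j j = (x j + 1)%N.
Proof. by move=> ij; rewrite ffunE eqxx eq_sym (negbTE ij) subn0. Qed.
Lemma swap_k x i j k : k != i -> k != j -> swap x i j k = x k.
Proof. by move=> ki kj; rewrite ffunE (negbTE ki) (negbTE kj) addn0 subn0. Qed.

Lemma sum_ind (U : {set E}) i : (\sum_(k in U) (k == i) = (i \in U))%N.
Proof.
case iU: (i \in U).
  by rewrite (bigD1 i) //= eqxx big1 // => k /andP[_ /negbTE ->].
by rewrite big1 // => k kU; apply/eqP; rewrite eqb0; apply/eqP => ki; rewrite -ki kU in iU.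
Qed.

Lemma xsum_swap x i j U : (0 < x i)%N -> i != j ->
  (xsum (swap x i j) U + (i \in U) = xsum x U + (j \in U))%N.
Proof.
move=> xi ij; rewrite /xsum -!sum_ind -!big_split /=.
by apply: eq_bigr => k _; rewrite swapE.
Qed.

Lemma xsum_mod x U V :
  (xsum x (U :|: V) + xsum x (U :&: V) = xsum x U + xsum x V)%N.
Proof.
rewrite /xsum !(big_mkcond (fun k => k \in _)) -!big_split /=.
apply: eq_bigr => k _; rewrite in_setU in_setI.
by case: (k \in U); case: (k \in V); rewrite /= ?add0n ?addn0.
Qed.

Lemma xsum0 x : xsum x set0 = 0%N.
Proof. by rewrite /xsum big_set0. Qed.

Lemma xsum_split x U V : (xsum x U = xsum x (U :&: V) + xsum x (U :\: V))%N.
Proof. by rewrite /xsum (big_setID V). Qed.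

Lemma xsum_lt x y (S : {set E}) i : (forall j, j \in S -> y j <= x j)%N -> i \in S ->
  (y i < x i)%N -> (xsum y S < xsum x S)%N.
Proof.
move=> H iS yx; rewrite /xsum (bigD1 i) //= [X in (_ < X)%N](bigD1 i) //=.
rewrite -addSn leq_add //; apply: leq_sum => k /andP[kS _]; exact: H.
Qed.

Lemma sum_split2 (F : E -> nat) i j : i != j ->
  (\sum_k F k = F i + F j + \sum_(k | (k != i) && (k != j)) F k)%N.
Proof. by move=> ij; rewrite (bigD1 i) //= (bigD1 j) //= ?addnA // eq_sym. Qed.

Lemma sum_split2R (R : realType) (F : E -> R) i j : i != j ->
  (\sum_k F k = F i + F j + \sum_(k | (k != i) && (k != j)) F k)%R.
Proof. by move=> ij; rewrite (bigD1 i) //= (bigD1 j) //= ?addrA // eq_sym. Qed.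

End Basics.

Section Exch.
Variable E : finType.
Variable f : {set E} -> nat.
Hypothesis pf : polymatroid_rank f.
Implicit Types (x y : {ffun E -> nat}) (U V : {set E}).

Definition inP x := forall U, (xsum x U <= f U)%N.

Lemma tight_UI x U V : inP x -> xsum x U = f U -> xsum x V = f V ->
  xsum x (U :|: V) = f (U :|: V) /\ xsum x (U :&: V) = f (U :&: V).
Proof.
case: pf => _ _ sub xP hU hV.
have := xsum_mod x U V; have := sub U V; have := xP (U :|: V); have := xP (U :&: V).
lia.
Qed.

Lemma exchange x y i : inP x -> inP y -> (xsum x setT <= xsum y setT)%N ->
  (y i < x i)%N ->
  exists j, [/\ (x j < y j)%N, inP (swap x i j) & inP (swap y j i)].
Proof.
move=> xP yP sxy yxi.
have [f0 _ sub] := pf.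
pose A := \bigcup_(U | (xsum x U == f U) && (i \notin U)) U.
have [At iA] : xsum x A = f A /\ i \notin A.
  rewrite /A; apply: (big_ind (fun U => xsum x U = f U /\ i \notin U)).
  - by rewrite xsum0 f0 in_set0.
  - move=> U V [tU iU] [tV iV]; split; first by have [] := tight_UI xP tU tV.
    by rewrite in_setU negb_or iU iV.
  - by move=> U /andP[/eqP].
pose B := \bigcap_(V | (xsum y V == f V) && (i \in V)) V.
have [iB Bt] : i \in B /\ (B = setT \/ xsum y B = f B).
  rewrite /B; apply: (big_ind (fun V => i \in V /\ (V = setT \/ xsum y V = f V))).
  - by rewrite in_setT; split => //; left.
  - move=> U V [iU tU] [iV tV]; split; first by rewrite in_setI iU iV.
    case: tU => [->|tU]; first by rewrite setTI.
    case: tV => [->|tV]; first by rewrite setIT; right.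
    by right; have [] := tight_UI yP tU tV.
  - by move=> V /andP[/eqP tV iV]; split => //; right.
have [j /andP[/andP[jB jA] xyj]] : exists j, (j \in B) && (j \notin A) && (x j < y j)%N.
  case: (boolP [exists j, (j \in B) && (j \notin A) && (x j < y j)%N]) => [/existsP //|/existsPn H]; exfalso.
  have H' : forall j, j \in B :\: A -> (y j <= x j)%N.
    move=> j; rewrite in_setD => /andP[jA jB]; rewrite leqNgt; apply/negP => lt.
    by have := H j; rewrite jA jB lt.
  have iBA : i \in B :\: A by rewrite in_setD iA iB.
  have lt := xsum_lt H' iBA yxi.
  case: Bt => [BT|Bt].
    have e1 := xsum_split x setT A; have e2 := xsum_split y setT A.
    rewrite setTI in e1 e2; rewrite BT in lt.
    have := yP A; lia.
  have e1 := xsum_split x (A :|: B) A; have e2 := xsum_split y B A.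
  rewrite setIUl setIid (setIC B A) (setUidPl (subsetIl A B)) in e1.
  have eBA : (A :|: B) :\: A = B :\: A.
    by apply/setP => k; rewrite !in_setD in_setU; case: (k \in A).
  rewrite eBA in e1.
  have := sub A B; have := xP (A :|: B); have := yP (A :&: B); rewrite (setIC B A) in e2.
  lia.
have ij : i != j by apply/eqP => ij; rewrite ij in yxi; lia.
exists j; split => // U.
  have := xsum_swap U (leq_ltn_trans (leq0n _) yxi) ij.
  have := xP U.
  case iU: (i \in U); first by move=> ? ?; lia.
  case jU: (j \in U); last by move=> ? ?; lia.
  case: (xsum x U =P f U) => [tU|ntU]; last by move=> ? ?; lia.
  have : U \subset A by apply: (bigcup_sup U); rewrite tU eqxx iU.
  by move/subsetP/(_ j jU); rewrite (negbTE jA).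
have := xsum_swap U (leq_ltn_trans (leq0n _) xyj) (ltac:(by rewrite eq_sym) : j != i).
have := yP U.
case jU: (j \in U); first by move=> ? ?; lia.
case iU: (i \in U); last by move=> ? ?; lia.
case: (xsum y U =P f U) => [tU|ntU]; last by move=> ? ?; lia.
have : B \subset U by apply: (bigcap_inf U); rewrite tU eqxx iU.
by move/subsetP/(_ j jB); rewrite jU.
Qed.
End Exch.

Lemma exists_min (d : Order.disp_t) (T : orderType d) (I : eqType) (s : seq I)
  (F : I -> T) : s != [::] ->
  exists2 a, a \in s & forall b, b \in s -> (F a <= F b)%O.
Proof.
elim: s => [//|a s IH] _.
case: (altP (s =P [::])) => [->|ne].
  by exists a; rewrite ?mem_head // => b; rewrite inE => /eqP ->.
have [m ms Hm] := IH ne.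
case: (leP (F a) (F m)) => [am|ma].
  exists a; first exact: mem_head.
  move=> b; rewrite inE => /orP[/eqP ->//|bs]; exact: le_trans am (Hm _ bs).
exists m; first by rewrite inE ms orbT.
move=> b; rewrite inE => /orP[/eqP ->|bs]; [exact: ltW|exact: Hm].
Qed.

Lemma regular_convex (R : realType) (C : nat -> nat -> R) : regular C ->
  forall t a b, (0 < a)%N -> (a <= b)%N -> (Cminus C a t <= Cminus C b t)%R.
Proof.
move=> rC t a b a0; elim: b => [|b IH]; first by rewrite leqn0 => /eqP a0'; rewrite a0' in a0.
rewrite leq_eqVlt => /orP[/eqP ->//|ab].
have b0 : (0 < b)%N by apply: leq_trans a0 _.
have [h1 h2] := rC b t b0.
exact: le_trans (IH ab) (le_trans h1 h2).
Qed.

Section Costs.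
Variable R : realType.
Variable E : finType.
Variable C : E -> nat -> nat -> R.
Implicit Types (x y t : {ffun E -> nat}).

Lemma cost_swap t x i j : (0 < x i)%N -> i != j ->
  total_cost C t (swap x i j) =
  (total_cost C t x + Cminus (C j) (x j).+1 (t j) - Cminus (C i) (x i) (t i))%R.
Proof.
move=> xi ij; rewrite /total_cost !(sum_split2R _ ij) swap_i // swap_j //.
rewrite (eq_bigr (fun k => C k (x k) (t k))); last first.
  by move=> k /andP[ki kj]; rewrite swap_k.
rewrite /Cminus subn1 addn1 /=; lra.
Qed.

Lemma l1dist_swap x y i j : (y i < x i)%N -> (x j < y j)%N ->
  (l1dist x (swap y j i) + 2 = l1dist x y)%N.
Proof.
move=> yxi xyj.
have ij : i != j by apply/eqP => ij; rewrite ij in yxi; lia.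
have ji : j != i by rewrite eq_sym.
rewrite /l1dist !(sum_split2 _ ij).
under eq_bigr => k /andP[ki kj] do rewrite (swap_k _ kj ki).
have h1 : `|x i - (y i + 1)| = (x i - (y i + 1))%N by rewrite distnEl //; lia.
have h2 : `|x i - y i| = (x i - y i)%N by rewrite distnEl //; lia.
have h3 : `|x j - (y j - 1)| = (y j - 1 - x j)%N by rewrite distnEr //; lia.
have h4 : `|x j - y j| = (y j - x j)%N by rewrite distnEr //; lia.
rewrite swap_i // swap_j // h1 h2 h3 h4; lia.
Qed.

Lemma xsumT x : xsum x setT = (\sum_k x k)%N.
Proof. by rewrite /xsum; apply: eq_bigl => k; rewrite in_setT. Qed.

Lemma l1dist_pos x y :
  (l1dist x y + xsum x setT = xsum y setT + 2 * \sum_k (x k - y k))%N.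
Proof.
rewrite !xsumT /l1dist -big_split big_distrr -big_split /=.
by apply: eq_bigr => k _; lia.
Qed.

End Costs.

Section Main.
Variable R : realType.
Variable E : finType.
Variable f : {set E} -> nat.
Variable C : E -> nat -> nat -> R.
Hypothesis pf : polymatroid_rank f.
Hypothesis rC : forall e, regular (C e).
Implicit Types (x y z t : {ffun E -> nat}).

Definition inb x d := [forall U, xsum x U <= f U]%N && (xsum x setT == d).

Lemma inbP x d : reflect (in_base f d x) (inb x d).
Proof.
apply: (iffP andP) => [[/forallP H /eqP H2]|[H /eqP H2]]; split => //.
by apply/forallP.
Qed.

Lemma base_bound d y e : in_base f d y -> (y e <= d)%N.
Proof. by case=> _ <-; rewrite xsumT (bigD1 e) //= leq_addr. Qed.

Definition cand d : seq {ffun E -> nat} :=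
  [seq [ffun e => nat_of_ord (g e)] | g : {ffun E -> 'I_d.+1} <- enum {ffun E -> 'I_d.+1}].

Lemma in_cand d y : in_base f d y -> y \in cand d.
Proof.
move=> yb; apply/mapP; exists [ffun e => inord (y e)]; first by rewrite mem_enum.
by apply/ffunP => e; rewrite !ffunE inordK // ltnS (base_bound e yb).
Qed.

Lemma closest t' d' x : (exists z, in_base f d' z) ->
  exists y, optimal f C t' d' y /\
    forall z, optimal f C t' d' z -> (l1dist x y <= l1dist x z)%N.
Proof.
move=> [z0 z0b].
pose s1 := [seq z <- cand d' | inb z d'].
have z0s1 : z0 \in s1 by rewrite mem_filter (in_cand z0b) andbT; apply/inbP.
have [z1 z1s1 Hz1] := exists_min (total_cost C t') (ltac:(by case: (s1) z0s1) : s1 != [::]).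
have z1b : in_base f d' z1 by move: z1s1; rewrite mem_filter => /andP[/inbP].
have z1o : optimal f C t' d' z1.
  split => // z zb; apply: Hz1; rewrite mem_filter (in_cand zb) andbT; exact/inbP.
pose s2 := [seq z <- cand d' | inb z d' && (total_cost C t' z <= total_cost C t' z1)%R].
have z1s2 : z1 \in s2 by rewrite mem_filter (in_cand z1b) lexx andbT andbT; apply/inbP.
have [y ys2 Hy] := exists_min (fun z => l1dist x z) (ltac:(by case: (s2) z1s2) : s2 != [::]).
move: ys2; rewrite mem_filter => /andP[/andP[/inbP yb yc] _].
exists y; split.
  split => // z zb; apply: le_trans yc _; exact: z1o.2.
move=> z [zb zo]; apply: Hy; rewrite mem_filter (in_cand zb) andbT.
by apply/andP; split; [apply/inbP|apply: zo].
Qed.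

End Main.

Section Main.
Variable R : realType.
Variable E : finType.
Variable f : {set E} -> nat.
Variable C : E -> nat -> nat -> R.
Hypothesis pf : polymatroid_rank f.
Hypothesis rC : forall e, regular (C e).
Implicit Types (x y z t : {ffun E -> nat}).

Lemma swap_base d x i j : (0 < x i)%N -> i != j -> in_base f d x ->
  inP f (swap x i j) -> in_base f d (swap x i j).
Proof.
move=> xi ij [_ xd] P; split => //.
have := xsum_swap setT xi ij; rewrite !in_setT xd; lia.
Qed.

Lemma pair_ineq t t' d d' x y i j :
  optimal f C t d x -> optimal f C t' d' y ->
  (forall z, optimal f C t' d' z -> (l1dist x y <= l1dist x z)%N) ->
  (y i < x i)%N -> (x j < y j)%N -> inP f (swap x i j) -> inP f (swap y j i) ->
  (Cminus (C i) (x i) (t i) <= Cminus (C j) (x j).+1 (t j))%R /\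
  (Cminus (C j) (y j) (t' j) < Cminus (C i) (y i).+1 (t' i))%R.
Proof.
move=> [xb xo] [yb yo] ycl yxi xyj Px Py.
have ij : i != j by apply/eqP => ij; rewrite ij in yxi; lia.
have ji : j != i by rewrite eq_sym.
have xi0 : (0 < x i)%N by lia.
have yj0 : (0 < y j)%N by lia.
split.
  have := xo _ (swap_base xi0 ij xb Px); rewrite cost_swap //; lra.
rewrite ltNge; apply/negP => H.
have y'b := swap_base yj0 ji yb Py.
have y'o : optimal f C t' d' (swap y j i).
  split => // z zb; rewrite cost_swap //; have := yo _ zb; lra.
have := ycl _ y'o; have := l1dist_swap yxi xyj; lia.
Qed.

End Main.

Section Main.
Variable R : realType.
Variable E : finType.
Variable f : {set E} -> nat.
Variable C : E -> nat -> nat -> R.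
Hypothesis pf : polymatroid_rank f.
Hypothesis rC : forall e, regular (C e).
Implicit Types (x y z t : {ffun E -> nat}).

Let cv e (t : nat) a b : (0 < a)%N -> (a <= b)%N -> (Cminus (C e) a t <= Cminus (C e) b t)%R.
Proof. move=> ? ?; exact: regular_convex. Qed.

Lemma exch_pair t t' d d' x y i :
  optimal f C t d x -> optimal f C t' d' y ->
  (forall z, optimal f C t' d' z -> (l1dist x y <= l1dist x z)%N) ->
  (d <= d')%N -> (y i < x i)%N ->
  exists j, [/\ (x j < y j)%N,
  (Cminus (C i) (x i) (t i) <= Cminus (C j) (x j).+1 (t j))%R &
  (Cminus (C j) (y j) (t' j) < Cminus (C i) (y i).+1 (t' i))%R].
Proof.
move=> xo yo ycl dd yxi.
have [j [xyj Px Py]] := exchange pf xo.1.1 yo.1.1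
   (ltac:(by rewrite xo.1.2 yo.1.2)) yxi.
have [h1 h2] := pair_ineq xo yo ycl yxi xyj Px Py.
by exists j; split.
Qed.

Lemma exch_pair_rev t t' d d' x y j :
  optimal f C t d x -> optimal f C t' d' y ->
  (forall z, optimal f C t' d' z -> (l1dist x y <= l1dist x z)%N) ->
  (d' <= d)%N -> (x j < y j)%N ->
  exists i, [/\ (y i < x i)%N,
  (Cminus (C i) (x i) (t i) <= Cminus (C j) (x j).+1 (t j))%R &
  (Cminus (C j) (y j) (t' j) < Cminus (C i) (y i).+1 (t' i))%R].
Proof.
move=> xo yo ycl dd xyj.
have [i [yxi Py Px]] := exchange pf yo.1.1 xo.1.1
   (ltac:(by rewrite xo.1.2 yo.1.2)) xyj.
have [h1 h2] := pair_ineq xo yo ycl yxi xyj Px Py.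
by exists i; split.
Qed.

Lemma l1distC x y : l1dist x y = l1dist y x.
Proof. by apply: eq_bigr => k _; rewrite distnC. Qed.

Lemma l1dist_tri x y z : (l1dist x z <= l1dist x y + l1dist y z)%N.
Proof. rewrite /l1dist -big_split; apply: leq_sum => k _ /=; lia. Qed.

Lemma base_dec d z : in_base f d.+1 z -> exists w, in_base f d w.
Proof.
move=> [zP zd].
have [e ze] : exists e, (0 < z e)%N.
  case: (boolP [exists e, 0 < z e]%N) => [/existsP//|/existsPn H].
  move: zd; rewrite xsumT big1 // => k _; have := H k; lia.
exists [ffun k => z k - (k == e)]%N; split.
  move=> U; apply: leq_trans (zP U); apply: leq_sum => k _; rewrite ffunE; lia.
have : (xsum [ffun k => z k - (k == e)]%N setT + (e \in setT) = xsum z setT)%N.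
  rewrite /xsum -sum_ind -big_split /=; apply: eq_bigr => k _; rewrite ffunE.
  by case: (k =P e) => [->|] /=; lia.
rewrite in_setT zd; lia.
Qed.

Lemma base_le d k : (exists z, in_base f d z) -> (k <= d)%N -> exists z, in_base f k z.
Proof.
elim: d => [|d IH] [z zb]; first by rewrite leqn0 => /eqP ->; exists z.
rewrite leq_eqVlt => /orP[/eqP ->|kd]; first by exists z.
have [w wb] := base_dec zb; exact: IH (ex_intro _ w wb) kd.
Qed.

Lemma step_d_up t d x : optimal f C t d x -> (exists z, in_base f d.+1 z) ->
  exists y, optimal f C t d.+1 y /\ (l1dist x y <= 1)%N.
Proof.
move=> xo ne.
have [y [yo ycl]] := closest C t x ne.
exists y; split => //.
have H : forall k, (x k <= y k)%N.
  move=> i; rewrite leqNgt; apply/negP => yxi.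
  have [j [xyj h1 h2]] := exch_pair xo yo ycl (leqnSn d) yxi.
  have := cv i (t i) (ltn0Sn (y i)) yxi; have := cv j (t j) (ltn0Sn (x j)) xyj.
  lra.
have := l1dist_pos x y; rewrite xo.1.2 yo.1.2 big1; first lia.
by move=> k _; apply/eqP; rewrite subn_eq0.
Qed.

Lemma step_d_down t d x : optimal f C t d.+1 x ->
  exists y, optimal f C t d y /\ (l1dist x y <= 1)%N.
Proof.
move=> xo.
have [y [yo ycl]] := closest C t x (base_dec xo.1).
exists y; split => //.
have H : forall k, (y k <= x k)%N.
  move=> j; rewrite leqNgt; apply/negP => xyj.
  have [i [yxi h1 h2]] := exch_pair_rev xo yo ycl (leqnSn d) xyj.
  have := cv i (t i) (ltn0Sn (y i)) yxi; have := cv j (t j) (ltn0Sn (x j)) xyj.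
  lra.
rewrite l1distC; have := l1dist_pos y x; rewrite xo.1.2 yo.1.2 big1; first lia.
by move=> k _; apply/eqP; rewrite subn_eq0.
Qed.

Lemma step_t_up t t' e d x : optimal f C t d x ->
  t' e = (t e).+1 -> (forall k, k != e -> t' k = t k) ->
  exists y, optimal f C t' d y /\ (l1dist x y <= 2)%N.
Proof.
move=> xo te tk.
have [y [yo ycl]] := closest C t' x (ex_intro _ x xo.1).
exists y; split => //.
have H1 : forall i, i != e -> (x i <= y i)%N.
  move=> i ie; rewrite leqNgt; apply/negP => yxi.
  have [j [xyj h1 h2]] := exch_pair xo yo ycl (leqnn d) yxi.
  have := cv i (t i) (ltn0Sn (y i)) yxi; have := cv j (t j) (ltn0Sn (x j)) xyj.
  rewrite (tk i ie) in h2.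
  case: (j =P e) => [je|/eqP je]; last by rewrite (tk j je) in h2; lra.
  subst j; rewrite te in h2.
  have := cv e (t e).+1 (ltn0Sn (x e)) xyj.
  have [r1 _] := rC e (t e) (ltn0Sn (x e)).
  lra.
have H2 : (x e <= (y e).+1)%N.
  rewrite leqNgt; apply/negP => yxe.
  have yxi : (y e < x e)%N by lia.
  have [j [xyj h1 h2]] := exch_pair xo yo ycl (leqnn d) yxi.
  have je : j != e by apply/eqP => je; subst j; lia.
  rewrite (tk j je) te in h2.
  have := cv j (t j) (ltn0Sn (x j)) xyj.
  have := cv e (t e) (ltn0Sn (y e).+1) yxe.
  have [_ r2] := rC e (t e) (ltn0Sn (y e)).
  lra.
have := l1dist_pos x y; rewrite xo.1.2 yo.1.2 (bigD1 e) //= big1; first lia.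
by move=> k ke; apply/eqP; rewrite subn_eq0 H1.
Qed.

Lemma step_t_down t t' e d x : optimal f C t d x ->
  t e = (t' e).+1 -> (forall k, k != e -> t' k = t k) ->
  exists y, optimal f C t' d y /\ (l1dist x y <= 2)%N.
Proof.
move=> xo te tk.
have [y [yo ycl]] := closest C t' x (ex_intro _ x xo.1).
exists y; split => //.
have H1 : forall j, j != e -> (y j <= x j)%N.
  move=> j je; rewrite leqNgt; apply/negP => xyj.
  have [i [yxi h1 h2]] := exch_pair_rev xo yo ycl (leqnn d) xyj.
  have := cv i (t i) (ltn0Sn (y i)) yxi; have := cv j (t j) (ltn0Sn (x j)) xyj.
  rewrite (tk j je) in h2.
  case: (i =P e) => [ie|/eqP ie]; last by rewrite (tk i ie) in h2; lra.
  subst i; rewrite te in h1.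
  have := cv e (t' e).+1 (ltn0Sn (y e)) yxi.
  have [r1 _] := rC e (t' e) (ltn0Sn (y e)).
  lra.
have H2 : (y e <= (x e).+1)%N.
  rewrite leqNgt; apply/negP => xye.
  have xyj : (x e < y e)%N by lia.
  have [i [yxi h1 h2]] := exch_pair_rev xo yo ycl (leqnn d) xyj.
  have ie : i != e by apply/eqP => ie; subst i; lia.
  rewrite (tk i ie) te in h1 h2.
  have := cv i (t i) (ltn0Sn (y i)) yxi.
  have := cv e (t' e) (ltn0Sn (x e).+1) xye.
  have [_ r2] := rC e (t' e) (ltn0Sn (x e)).
  lra.
rewrite l1distC; have := l1dist_pos y x; rewrite xo.1.2 yo.1.2 (bigD1 e) //= big1; first lia.
by move=> k ke; apply/eqP; rewrite subn_eq0 H1.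
Qed.

End Main.

Section Main.
Variable R : realType.
Variable E : finType.
Variable f : {set E} -> nat.
Variable C : E -> nat -> nat -> R.
Hypothesis pf : polymatroid_rank f.
Hypothesis rC : forall e, regular (C e).
Implicit Types (x y z t : {ffun E -> nat}).

Lemma chain_t t' d n : forall t x, l1dist t t' = n -> optimal f C t d x ->
  exists y, optimal f C t' d y /\ (l1dist x y <= 2 * n)%N.
Proof.
elim: n => [|n IH] t x tn xo.
  have tt : t = t'.
    apply/ffunP => k; move: tn => /eqP; rewrite sum_nat_eq0 => /forallP/(_ k) /=.
    lia.
  by subst t; exists x; split => //; rewrite /l1dist big1 // => k _; lia.
have [e te] : exists e, t e != t' e.
  case: (boolP [exists e, t e != t' e]) => [/existsP//|/existsPn H].
  move: tn; rewrite /l1dist big1 // => k _; have := H k; rewrite negbK => /eqP ->.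
  lia.
case: (ltngtP (t e) (t' e)) => [lt|gt|eq]; last by rewrite eq eqxx in te.
  pose t1 := [ffun k => t k + (k == e)]%N.
  have [y1 [y1o d1]] := step_t_up pf rC (t' := t1) (e := e) xo
      (ltac:(by rewrite ffunE eqxx addn1))
      (ltac:(by move=> k /negbTE ke; rewrite ffunE ke addn0)).
  have t1n : l1dist t1 t' = n.
    move: tn; rewrite /l1dist (bigD1 e) //= [X in _ -> X = _](bigD1 e) //=.
    under [X in _ -> _ + X = _]eq_bigr => k /negbTE ke do rewrite ffunE ke addn0.
    rewrite ffunE eqxx; lia.
  have [y [yo dy]] := IH _ _ t1n y1o.
  exists y; split => //; have := l1dist_tri x y1 y; lia.
pose t1 := [ffun k => t k - (k == e)]%N.
have [y1 [y1o d1]] := step_t_down pf rC (t' := t1) (e := e) xo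
    (ltac:(rewrite ffunE eqxx; lia))
    (ltac:(by move=> k /negbTE ke; rewrite ffunE ke subn0)).
have t1n : l1dist t1 t' = n.
  move: tn; rewrite /l1dist (bigD1 e) //= [X in _ -> X = _](bigD1 e) //=.
  under [X in _ -> _ + X = _]eq_bigr => k /negbTE ke do rewrite ffunE ke subn0.
  rewrite ffunE eqxx; lia.
have [y [yo dy]] := IH _ _ t1n y1o.
exists y; split => //; have := l1dist_tri x y1 y; lia.
Qed.

Lemma chain_d_up t n : forall d x, optimal f C t d x ->
  (exists z, in_base f (d + n) z) ->
  exists y, optimal f C t (d + n) y /\ (l1dist x y <= n)%N.
Proof.
elim: n => [|n IH] d x xo ne.
  by rewrite addn0; exists x; split => //; rewrite /l1dist big1 // => k _; lia.
have [y1 [y1o d1]] := step_d_up pf rC xo (base_le ne (ltac:(lia) : (d.+1 <= d + n.+1)%N)).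
rewrite -addSnnS in ne *.
have [y [yo dy]] := IH _ _ y1o ne.
exists y; split => //; have := l1dist_tri x y1 y; lia.
Qed.

Lemma chain_d_down t n : forall d x, optimal f C t (d + n) x ->
  exists y, optimal f C t d y /\ (l1dist x y <= n)%N.
Proof.
elim: n => [|n IH] d x xo.
  by rewrite addn0 in xo; exists x; split => //; rewrite /l1dist big1 // => k _; lia.
rewrite addnS in xo.
have [y1 [y1o d1]] := step_d_down pf rC xo.
have [y [yo dy]] := IH _ _ y1o.
exists y; split => //; have := l1dist_tri x y1 y; lia.
Qed.

End Main.

Unset Implicit Arguments.

Theorem theorem3p5 (R : realType) (E : finType) (f : {set E} -> nat)
  (C : E -> nat -> nat -> R) (D : nat -> Prop) :
  (0 < #|E|)%N ->
  polymatroid_rank f ->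
  (forall e x t, (0 <= C e x t)%R) ->
  (forall e, regular (C e)) ->
  (forall d, D d -> exists x, in_base f d x) ->
  forall (t : {ffun E -> nat}) (d : nat) (x : {ffun E -> nat}),
    D d -> optimal f C t d x ->
    forall (d' : nat) (t' : {ffun E -> nat}), D d' ->
      exists x' : {ffun E -> nat},
        optimal f C t' d' x' /\
        (l1dist x x' <= 2 * l1dist t t' + `|d - d'|)%N.
Proof.
move=> _ pf _ rC HD t d x Dd xo d' t' Dd'.
have [y1 [y1o d1]] := chain_t pf rC (erefl (l1dist t t')) xo.
case: (leqP d d') => [le|lt].
  have ne := HD _ Dd'; rewrite -(subnKC le) in ne.
  have [y [yo dy]] := chain_d_up pf rC y1o ne.
  rewrite subnKC // in yo.
  exists y; split => //; have := l1dist_tri x y1 y; lia.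
have xo' : optimal f C t' (d' + (d - d')) y1 by rewrite subnKC // ltnW.
have [y [yo dy]] := chain_d_down pf rC xo'.
exists y; split => //; have := l1dist_tri x y1 y; lia.
Qed.
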